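(* There is an absolute constant $c>0$ such that for all $\varepsilon\in(0,\tfrac18)$, $$\mathsf C_{\det}(\varepsilon;\mathsf O^{0^{\rm th}+1^{\rm st}})\ge \mathsf C_{\rm rand}(\varepsilon;\mathsf O^{0^{\rm th}+1^{\rm st}})\ge c\log\frac1\varepsilon.$$
   Context: A function $f:\mathbb R^d\to\mathbb R$ is $\beta$-smooth if it is continuously differentiable and $\nabla f$ is $\beta$-Lipschitz. A point $x$ is an $\varepsilon$-stationary point of $f$ if $\|\nabla f(x)\|<\varepsilon$. Let $\mathcal F(\beta,\Delta,d)$ be the class of $\beta$-smooth $f:\mathbb R^d\to\mathbb R$ with $f(0)-\inf f\le\Delta$. The oracle $\mathsf O^{1^{\rm st}}$ returns $\nabla f(x)$ on query $x$; the oracle $\mathsf O^{0^{\rm th}+1^{\rm st}}$ returns $(f(x),\nabla f(x))$. A deterministic algorithm chooses queries $x_1,x_2,\dots\in\mathbb R^d$ where each $x_{i}$ is a (measurable) function of $x_1,\dots,x_{i-1}$ and the oracle responses at them; a randomized algorithm is the same except that each $x_i$ may also depend on a random seed $U$ independent of $f$. $\mathsf C_{\det}(\varepsilon;\beta,\Delta,d,\mathsf O)$ is the least $N$ such that some deterministic algorithm using $\mathsf O$ has, for every $f\in\mathcal F(\beta,\Delta,d)$, an $\varepsilon$-stationary point of $f$ among $x_1,\dots,x_N$; $\mathsf C_{\rm rand}(\varepsilon;\beta,\Delta,d,\mathsf O)$ is the least $N$ such that some randomized algorithm using $\mathsf O$ has, for every $f\in\mathcal F(\beta,\Delta,d)$,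 with probability at least $1/2$ an $\varepsilon$-stationary point of $f$ among $x_1,\dots,x_N$. Abbreviate $\mathsf C_*(\varepsilon;\mathsf O)=\mathsf C_*(\varepsilon;1,1,1,\mathsf O)$ (one-dimensional, $1$-smooth, objective gap at most $1$). *)

(* Defs.v *)
From HB Require Import structures.
From mathcomp Require Import all_boot all_order all_algebra.
From mathcomp Require Import all_classical all_reals all_analysis.

Set Implicit Arguments.
Unset Strict Implicit.
Unset Printing Implicit Defensive.

Import Order.TTheory GRing.Theory Num.Theory.
Import numFieldNormedType.Exports.
Local Open Scope classical_set_scope.
Local Open Scope ring_scope.

(* beta-smooth (d = 1): continuously differentiable with beta-Lipschitz
   derivative; the gradient is the derivative f^`(). *)
Definition smooth (R : realType) (beta : R) (f : R -> R) : Prop :=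
  (forall x : R, derivable f x 1) /\
  continuous (derive1 f) /\
  (forall x y : R, `|derive1 f x - derive1 f y| <= beta * `|x - y|).

(* f(0) - inf f <= Delta, i.e. f(0) - Delta is a lower bound of f. *)
Definition gap_le (R : realType) (Delta : R) (f : R -> R) : Prop :=
  forall x, f 0 - Delta <= f x.

Definition Fclass (R : realType) (beta Delta : R) (f : R -> R) : Prop :=
  smooth beta f /\ gap_le Delta f.

Definition stationary (R : realType) (eps : R) (f : R -> R) (x : R) : Prop :=
  `|derive1 f x| < eps.

(* A history entry: (query x, (f x, f' x)) -- the oracle O^{0th+1st}. *)
Definition entry (R : realType) := (R * (R * R))%type.

Definition oracle01 (R : realType) (f : R -> R) (x : R) : entry R :=
  (x, (f x, derive1 f x)).

(* Deterministic algorithm: query number i (0-indexed) is a function of the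
   list of the i previous queries together with the oracle responses. *)
Definition det_alg (R : realType) := nat -> seq (entry R) -> R.

Fixpoint det_hist (R : realType) (A : det_alg R) (f : R -> R) (n : nat)
  : seq (entry R) :=
  match n with
  | 0 => [::]
  | n'.+1 => let h := det_hist A f n' in rcons h (oracle01 f (A n' h))
  end.

Definition det_query (R : realType) (A : det_alg R) (f : R -> R) (i : nat) : R :=
  A i (det_hist A f i).

Definition det_achieves (R : realType) (eps : R) (N : nat) : Prop :=
  exists A : det_alg R, forall f, Fclass 1 1 f ->
    exists i, (i < N)%N /\ stationary eps f (det_query A f i).

Definition rand_alg (R : realType) (T : Type) := nat -> T -> seq (entry R) -> R.

Fixpoint rand_hist (R : realType) (T : Type) (A : rand_alg R T) (f : R -> R)
  (u : T) (n : nat) : seq (entry R) :=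
  match n with
  | 0 => [::]
  | n'.+1 => let h := rand_hist A f u n' in rcons h (oracle01 f (A n' u h))
  end.

Definition rand_query (R : realType) (T : Type) (A : rand_alg R T)
  (f : R -> R) (i : nat) (u : T) : R :=
  A i u (rand_hist A f u i).

(* For some probability space (T, P) carrying the seed U (independent of f),
   some randomized algorithm such that for every f in F(1,1,1) the query maps
   u |-> x_i(u) are measurable, finds an eps-stationary point among its first
   N queries with probability at least 1/2. *)
Definition rand_achieves (R : realType) (eps : R) (N : nat) : Prop :=
  exists (d : measure_display) (T : measurableType d) (P : probability T R)
         (A : rand_alg R T),
    forall f, Fclass 1 1 f ->
      (forall i, measurable_fun setT (rand_query A f i)) /\
      (P [set u | exists i, (i < N)%N /\ stationary eps f (rand_query A f i u)]
         >= (2^-1)%:E)%E.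

(* Complexities: least such N (as an extended real; +oo if none). *)
Definition C_det (R : realType) (eps : R) : \bar R :=
  ereal_inf [set (N%:R)%:E | N in [set N : nat | det_achieves eps N]].

Definition C_rand (R : realType) (eps : R) : \bar R :=
  ereal_inf [set (N%:R)%:E | N in [set N : nat | rand_achieves eps N]].

(* Main.v *)
Require Import Defs.
From mathcomp Require Import all_boot all_order all_algebra.
From mathcomp Require Import all_classical all_reals all_analysis.
From mathcomp Require Import lra ring zify.
From mathcomp Require Import measurable_realfun measurable_fun_approximation.
Import Order.TTheory GRing.Theory Num.Theory.
Import numFieldNormedType.Exports.
Local Open Scope classical_set_scope.
Local Open Scope ring_scope.

Set Implicit Arguments.
Unset Strict Implicit.


Section S.
Variable R : realType.

Lemma quad_cvg (F D : R -> R) x :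
  (forall y, `|F y - F x - D x * (y - x)| <= (y - x)^+2) ->
  (fun h : R => h^-1 *: (F (h *: 1 + x) - F x)) @ 0^' --> D x.
Proof.
move=> H; apply/cvgrPdist_lt => e e0.
near=> h.
have h0 : h != 0 by near: h; exact: nbhs_dnbhs_neq.
have he : `|h| < e.
  near: h; apply: nbhs_dnbhs.
  exact: (@nbhs0_lt R R e e0). 
have := H (h + x).
rewrite addrK scaler1 /GRing.scale /=.
move=> Hh.
have -> : D x - h^-1 * (F (h + x) - F x) = - h^-1 * (F (h + x) - F x - D x * h).
  by field.
rewrite normrM normrN normrV ?unitfE //.
rewrite ltr_pdivrMl ?normr_gt0 //.
apply: (le_lt_trans Hh).
by rewrite -(real_normK (num_real h)) expr2 ltr_pM2l ?normr_gt0.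
Unshelve. all: by end_near.
Qed.

Lemma quad_derive (F D : R -> R) x :
  (forall y, `|F y - F x - D x * (y - x)| <= (y - x)^+2) ->
  derivable F x 1 /\ derive1 F x = D x.
Proof.
move=> H; have C := @quad_cvg F D x H.
split; first by apply/cvg_ex; exists (D x).
rewrite /derive1; apply: cvg_lim => //.
suff -> : (fun h : R => h^-1 *: (F (h + x) - F x)) = (fun h : R => h^-1 *: (F (h *: 1 + x) - F x)) by exact: C.
by apply/funext => h; rewrite scaler1.
Qed.
End S.


Section S.
Variable R : realType.
Variables (eps t h : R).
Hypothesis eps0 : 0 < eps.
Hypothesis h0 : 0 <= h.
Hypothesis hh : h * h = 2 * eps * t.

Definition p1 := t - eps.
Definition p3 := t + eps + h.
Definition p4 := t + eps + 2 * h.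

Definition FF (x : R) : R :=
  if x <= p1 then - (eps * x)
  else if x <= p3 then (x - t) * (x - t) / 2 + eps * eps / 2 - eps * t
  else if x <= p4 then eps * x - (x - p4) * (x - p4) / 2
  else eps * x.

Definition DD (x : R) : R :=
  if x <= p1 then - eps
  else if x <= p3 then x - t
  else if x <= p4 then eps - (x - p4)
  else eps.

Lemma FF_quad x y : `|FF y - FF x - DD x * (y - x)| <= (y - x)^+2.
Proof.
rewrite /FF /DD expr2 ler_norml.
have p13 : p1 <= p3 by move: eps0 h0; rewrite /p1 /p3 => *; lra.
have p34 : p3 <= p4 by move: eps0 h0; rewrite /p3 /p4 => *; lra.
case: (lerP x p1) => hx1; case: (lerP x p3) => hx3; case: (lerP x p4) => hx4;
case: (lerP y p1) => hy1; case: (lerP y p3) => hy3; case: (lerP y p4) => hy4;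
  move: eps0 h0 hh p13 p34 hx1 hx3 hx4 hy1 hy3 hy4; rewrite /p1 /p3 /p4 => *;
  apply/andP; split; try nra.
all: have sq := sqr_ge0 (y - x); rewrite expr2 in sq; nra.
Qed.

Lemma DD_lip x y : `|DD x - DD y| <= `|x - y|.
Proof.
rewrite /DD ler_norml.
have n1 := ler_norm (x - y).
have n2 : y - x <= `|x - y| by rewrite distrC ler_norm.
have p13 : p1 <= p3 by move: eps0 h0; rewrite /p1 /p3 => *; lra.
have p34 : p3 <= p4 by move: eps0 h0; rewrite /p3 /p4 => *; lra.
case: (lerP x p1) => hx1; case: (lerP x p3) => hx3; case: (lerP x p4) => hx4;
case: (lerP y p1) => hy1; case: (lerP y p3) => hy3; case: (lerP y p4) => hy4;
  move: eps0 h0 n1 n2 p13 p34 hx1 hx3 hx4 hy1 hy3 hy4; rewrite /p1 /p3 /p4 => *;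
  apply/andP; split; lra.
Qed.

Lemma DD_cont : continuous DD.
Proof.
move=> x; apply/cvgrPdist_lt => e e0.
have : (id : R -> R) @ x --> x by exact: cvg_id.
move/cvgrPdist_lt/(_ e e0); apply: filterS => y hy.
exact: le_lt_trans (DD_lip x y) hy.
Qed.

Lemma FF_lb x : eps * eps / 2 - eps * t <= FF x.
Proof.
rewrite /FF.
have p13 : p1 <= p3 by move: eps0 h0; rewrite /p1 /p3 => *; lra.
have p34 : p3 <= p4 by move: eps0 h0; rewrite /p3 /p4 => *; lra.
case: (lerP x p1) => hx1; case: (lerP x p3) => hx3; case: (lerP x p4) => hx4;
  move: eps0 h0 hh p13 p34 hx1 hx3 hx4; rewrite /p1 /p3 /p4 => *; have := sqr_ge0 (x - t); rewrite expr2; nra.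
Qed.

Lemma DD_stat x : `|DD x| < eps -> p1 < x <= p4.
Proof.
rewrite ltr_norml => /andP [a b]; move: a b; rewrite /DD.
have p13 : p1 <= p3 by move: eps0 h0; rewrite /p1 /p3 => *; lra.
have p34 : p3 <= p4 by move: eps0 h0; rewrite /p3 /p4 => *; lra.
case: (lerP x p1) => hx1; case: (lerP x p3) => hx3; case: (lerP x p4) => hx4;
  move: eps0 h0 p13 p34 hx1 hx3 hx4; rewrite /p1 /p3 /p4 => *;
  apply/andP; split; lra.
Qed.

Lemma FF_left x : x <= p1 -> FF x = - (eps * x) /\ DD x = - eps.
Proof. by move=> hx; rewrite /FF /DD hx. Qed.

Lemma FF_right x : p4 < x -> FF x = eps * x /\ DD x = eps.
Proof.
move=> hx.
have p13 : p1 <= p3 by move: eps0 h0; rewrite /p1 /p3 => *; lra.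
have p34 : p3 <= p4 by move: eps0 h0; rewrite /p3 /p4 => *; lra.
have n1 : ~~ (x <= p1) by rewrite -ltNge; apply: le_lt_trans hx; apply: le_trans p34.
have n3 : ~~ (x <= p3) by rewrite -ltNge; apply: le_lt_trans hx.
by rewrite /FF /DD (negbTE n1) (negbTE n3) leNgt hx.
Qed.
End S.

Unset Implicit Arguments.
Set Strict Implicit.


Section F.
Variable R : realType.

Definition tn (eps : R) (n : nat) : R := 2 * eps * (n%:R * n%:R).
Definition hn (eps : R) (n : nat) : R := 2 * eps * n%:R.
Definition fam (eps : R) (n : nat) := FF eps (tn eps n) (hn eps n).
Definition famD (eps : R) (n : nat) := DD eps (tn eps n) (hn eps n).

Lemma hn_ge0 eps n : 0 < eps -> 0 <= hn eps n.
Proof. move=> e; rewrite /hn; apply: mulr_ge0 => //; apply: mulr_ge0 => //; lra. Qed.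

Lemma hn_sq eps n : hn eps n * hn eps n = 2 * eps * tn eps n.
Proof. rewrite /hn /tn; ring. Qed.

Lemma fam_deriv eps n x : 0 < eps ->
  derivable (fam eps n) x 1 /\ derive1 (fam eps n) x = famD eps n x.
Proof.
move=> e; apply: quad_derive => y.
exact: (FF_quad e (hn_ge0 eps n e) (hn_sq eps n) x y).
Qed.

Lemma fam_derive1 eps n : 0 < eps -> derive1 (fam eps n) = famD eps n.
Proof. by move=> e; apply/funext => x; case: (fam_deriv eps n x e). Qed.

Lemma fam_class eps n : 0 < eps -> (1 <= n)%N ->
  2 * eps * eps * (n%:R * n%:R) <= 1 -> Fclass 1 1 (fam eps n).
Proof.
move=> e n1 hb; split; first split.
- by move=> x; case: (fam_deriv eps n x e).
- split; first by rewrite fam_derive1 //; exact: (DD_cont (t := tn eps n) e (hn_ge0 eps n e)).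
  move=> x y; rewrite fam_derive1 // mul1r.
  exact: (DD_lip (tn eps n) e (hn_ge0 eps n e) x y).
- move=> x.
  have nR : 1 <= n%:R :> R by rewrite ler1n.
  have f0 : fam eps n 0 = 0.
    case: (FF_left (eps := eps) (t := tn eps n) (hn eps n) (x := 0)).
      have n2 : 1 <= n%:R * n%:R :> R by nra.
      rewrite /p1 /tn; move: n2; rewrite -subr_ge0 => n2; have := mulr_ge0 (ltW e) n2; nra.
    by rewrite /fam => ->; rewrite mulr0 oppr0.
  rewrite f0.
  have := FF_lb e (hn_ge0 eps n e) (hn_sq eps n) x.
  rewrite /fam; move: hb; rewrite /tn => *.
  have := mulr_ge0 (ltW e) (ltW e); nra.
Qed.

Definition region (eps : R) (n : nat) (x : R) : bool :=
  (p1 eps (tn eps n) < x) && (x <= p4 eps (tn eps n) (hn eps n)).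

Lemma region_lt eps n m x : 0 < eps -> (n < m)%N -> region eps n x -> region eps m x -> False.
Proof.
move=> e nm /andP [a b] /andP [c d].
have : n%:R + 1 <= m%:R :> R by rewrite natr1 ler_nat.
have : 0 <= n%:R :> R by [].
move: a b c d; rewrite /p1 /p4 /tn /hn => *; nra.
Qed.

Lemma region_uniq eps n m x : 0 < eps -> region eps n x -> region eps m x -> n = m.
Proof.
move=> e a b; case: (ltngtP n m) => // nm.
- by case: (region_lt _ _ _ _ e nm a b).
- by case: (region_lt _ _ _ _ e nm b a).
Qed.

Lemma fam_oracle eps n x : 0 < eps ->
  oracle01 (fam eps n) x = (x, (- (eps * x), - eps)) \/
  oracle01 (fam eps n) x = (x, (eps * x, eps)) \/ region eps n x.
Proof.
move=> e; rewrite /oracle01 fam_derive1 // /fam /famD.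
case: (lerP x (p1 eps (tn eps n))) => h1.
  by left; case: (FF_left (hn eps n) (x:=x) h1) => -> ->.
case: (lerP x (p4 eps (tn eps n) (hn eps n))) => h4.
  by right; right; rewrite /region h1 h4.
by right; left; case: (FF_right e (hn_ge0 eps n e) h4) => -> ->.
Qed.

Lemma fam_stat eps n x : 0 < eps -> stationary eps (fam eps n) x -> region eps n x.
Proof.
move=> e; rewrite /stationary fam_derive1 // => hs.
exact: (DD_stat e (hn_ge0 eps n e) hs).
Qed.
End F.


Lemma size_undup_sub (T : eqType) (s t : seq T) :
  {subset s <= t} -> (size (undup s) <= size t)%N.
Proof.
move=> st; apply: uniq_leq_size; first exact: undup_uniq.
by move=> x; rewrite mem_undup; apply: st.
Qed.

Section C.
Variable R : realType.
Variable T : Type.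
Variables (A : rand_alg R T) (u : T) (eps : R).
Variable f : nat -> R -> R.
Variable region : nat -> R -> bool.
Variables Ps Ph : R -> entry R.
Hypothesis Hor : forall j x, oracle01 (f j) x = Ps x \/ oracle01 (f j) x = Ph x \/ region j x.
Hypothesis Hreg : forall j k x, region j x -> region k x -> j = k.
Hypothesis Hst : forall j x, stationary eps (f j) x -> region j x.
Variable s : seq nat.
Hypothesis s_uniq : uniq s.

Definition Br (x : R) : entry R :=
  oracle01 (f (nth 0%N s (find (fun k => region k x) s))) x.

Definition sel (k : nat) : R -> entry R :=
  match k with 0 => Ps | 1 => Ph | _ => Br end.

Lemma hist_count i :
  (size (undup [seq rand_hist A (f j) u i | j <- s]) <= 3 ^ i)%N.
Proof.
elim: i => [|i IH].
  apply: (@leq_trans (size [:: [::] : seq (entry R)])) => //.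
  by apply: size_undup_sub => x /mapP [j _ ->].
set H := undup _ in IH.
pose L := [seq rcons h (sel k (A i u h)) | h <- H, k <- iota 0 3].
apply: (@leq_trans (size L)).
  apply: size_undup_sub => x /mapP [j js ->] /=.
  have hj : rand_hist A (f j) u i \in H by rewrite mem_undup; apply: map_f.
  have E : exists2 k, k \in iota 0 3 &
      oracle01 (f j) (A i u (rand_hist A (f j) u i)) = sel k (A i u (rand_hist A (f j) u i)).
    set y := A i u _.
    case: (Hor j y) => [->|[->|rj]]; first by exists 0%N.
      by exists 1%N.
    exists 2%N => //=; rewrite /Br.
    have hs : has (fun k => region k y) s by apply/hasP; exists j.
    have := nth_find 0%N hs => rk.
    by rewrite (Hreg _ _ _ rk rj).
  case: E => k kin ->.
  exact: (allpairs_f (fun h k => rcons h (sel k (A i u h))) hj kin).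
by rewrite size_allpairs size_iota expnSr leq_mul2r IH orbT.
Qed.

Lemma stat_count i :
  (count (fun j => (`|derive1 (f j) (rand_query A (f j) i u)| < eps)%R) s <= 3 ^ i)%N.
Proof.
apply: leq_trans (hist_count i).
set P := fun j => _.
rewrite -size_filter.
pose q j := rand_query A (f j) i u.
have Hq : {in [seq j <- s | P j] &, injective q}.
  move=> j k; rewrite !mem_filter => /andP [pj _] /andP [pk _] e.
  apply: (Hreg _ _ _ (Hst _ _ pj)); rewrite /q in e; rewrite e.
  exact: Hst _ _ pk.
rewrite -(size_map q).
apply: (@leq_trans (size [seq A i u h | h <- undup [seq rand_hist A (f j) u i | j <- s]])); last by rewrite size_map.
apply: uniq_leq_size.
  by rewrite (map_inj_in_uniq Hq) filter_uniq.
move=> x /mapP [j]; rewrite mem_filter => /andP [_ js] ->.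
apply: map_f; rewrite mem_undup; exact: map_f.
Qed.

Lemma sum_geom N : (\sum_(i < N) 3 ^ i <= 3 ^ N)%N.
Proof.
elim: N => [|N IH]; first by rewrite big_ord0.
rewrite big_ord_recr /= expnS; move: IH; set a := (3 ^ N)%N; set b := (\sum_(i < N) _)%N; lia.
Qed.

Lemma total_count N :
  (\sum_(j <- s) [exists i : 'I_N, (`|derive1 (f j) (rand_query A (f j) i u)| < eps)%R] <= 3 ^ N)%N.
Proof.
apply: leq_trans (sum_geom N).
apply: (@leq_trans (\sum_(j <- s) \sum_(i < N) ((`|derive1 (f j) (rand_query A (f j) i u)| < eps)%R : nat))).
  apply: leq_sum => j _.
  case: existsP => [[i pi]|_] //.
  by rewrite (bigD1 i) //= pi.
rewrite exchange_big /=; apply: leq_sum => i _.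
apply: leq_trans _ (stat_count i).
rewrite -sum1_count big_mkcond /=; apply: eq_leq; rewrite [RHS]big_mkcond /=; apply: eq_bigr => j _.
by case: ifP.
Qed.
End C.


Section M.
Variable R : realType.

Lemma lower_main (eps : R) (N M : nat) : 0 < eps ->
  2 * eps * eps * (M%:R * M%:R) <= 1 -> rand_achieves eps N ->
  M%:R / 2 <= (3 ^ N)%:R :> R.
Proof.
move=> e hM [d [T [P [A HA]]]].
pose f j := @fam R eps j.+1.
have Hf j : (j < M)%N -> Fclass 1 1 (f j).
  move=> jM; apply: fam_class => //.
  apply: le_trans hM.
  have : j.+1%:R <= M%:R :> R by rewrite ler_nat.
  have : 0 <= j.+1%:R :> R by [].
  move=> *; have ee : 0 <= 2 * eps * eps by nra.
  by rewrite ler_wpM2l //; apply: ler_pM.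
pose Q j i := [set: T] `&` (derive1 (f j) \o rand_query A (f j) i) @^-1` [set` `]-eps, eps[%R].
pose S j := if (j < M)%N then \bigcup_i (if (i < N)%N then Q j i else set0) else set0.
have mS j : measurable (S j).
  rewrite /S; case: ifP => jM //.
  apply: bigcupT_measurable => i; case: ifP => // iN.
  apply: measurableT_comp => //.
    rewrite /f fam_derive1 //; apply: continuous_measurable_fun.
    exact: DD_cont (hn_ge0 _ _ _ e).
  by case: (HA _ (Hf j jM)) => mq _.
have SE j : (j < M)%N -> S j =
   [set u | exists i, (i < N)%N /\ stationary eps (f j) (rand_query A (f j) i u)].
  move=> jM; rewrite /S jM; apply/seteqP; split => u /=.
    case=> i _; case: ifP => iN // [_ /=]; rewrite in_itv /= => hq.
    by exists i; split => //; rewrite /stationary ltr_norml.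
  case=> i [iN st]; exists i => //; rewrite iN; split => //=.
  by rewrite in_itv /=; rewrite /stationary ltr_norml in st.
have PS j : (j < M)%N -> ((2^-1)%:E <= P (S j))%E.
  by move=> jM; rewrite SE //; case: (HA _ (Hf j jM)).
have ind j u : (j < M)%N -> \1_(S j) u =
   ([exists i : 'I_N, `|derive1 (f j) (rand_query A (f j) i u)| < eps] : nat)%:R :> R.
  move=> jM; rewrite /indic SE //; congr (_%:R); congr nat_of_bool.
  apply/idP/idP.
    rewrite inE => -[i [iN st]]; apply/existsP; exists (Ordinal iN); exact: st.
  move=> /existsP [i st]; rewrite inE; exists i; split => //; exact: ltn_ord.
have key : (\sum_(0 <= j < M) P (S j) <= ((3 ^ N)%:R)%:E)%E.
    have E1 : (\sum_(0 <= j < M) P (S j) =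
      \int[P]_x (\sum_(0 <= j < M) (\1_(S j) x)%:E))%E.
    rewrite ge0_integral_sum //; try (by move=> j; apply/measurable_EFinP; exact: measurable_indic);
      try (by move=> j x _; rewrite lee_fin /indic).
    by apply: eq_bigr => j _; rewrite integral_indic // setIT.
  idtac "HERE". rewrite E1.
  apply: (@le_trans _ _ (\int[P]_x (cst ((3 ^ N)%:R)%:E x))%E).
    apply: ge0_le_integral => //.
    - by move=> x _; apply: sume_ge0 => j _; rewrite lee_fin /indic.
    - apply: emeasurable_sum => j.
      by apply/measurable_EFinP; exact: measurable_indic.
    - move=> x _; rewrite sumEFin lee_fin /=.
      rewrite big_seq (eq_bigr (fun j => ([exists i : 'I_N,
          `|derive1 (f j) (rand_query A (f j) i x)| < eps] : nat)%:R)); last first.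
        by move=> j; rewrite mem_index_iota => /andP [_ jM]; rewrite ind.
      rewrite -big_seq -natr_sum ler_nat.
      apply: (@total_count R _ A x eps f (fun j => @region R eps j.+1)
         (fun x => (x, (- (eps * x), - eps))) (fun x => (x, (eps * x, eps)))).
      + by move=> j y; exact: fam_oracle _ _ _ _ e.
      + by move=> j k y a b; have := region_uniq _ _ _ _ _ e a b => -[].
      + by move=> j y; exact: fam_stat _ _ _ _ e.
      + exact: iota_uniq.
  rewrite integral_cst //.
  rewrite -[X in (_ <= X)%E]mule1; apply: lee_wpmul2l; first by rewrite lee_fin ler0n.
  have h1 := probability_le1 P (@measurableT _ T).
  first [exact: h1 | (apply: le_trans h1; apply: le_measure; rewrite ?inE //) | idtac].
have low : (((2^-1 : R) *+ M)%:E <= \sum_(0 <= j < M) P (S j))%E.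
  have -> : (2^-1 : R) *+ M = \sum_(0 <= j < M) (2^-1 : R) by rewrite sumr_const_nat subn0.
    rewrite -sumEFin big_seq_cond [X in (_ <= X)%E]big_seq_cond.
  apply: lee_sum => j; rewrite andbT mem_index_iota => /andP [_ jM].
  exact: (PS j jM).
have := le_trans low key; rewrite lee_fin -mulr_natl.
move=> h; lra.
Qed.
End M.


Section Fin.
Variable R : realType.

Lemma det_rand (eps : R) N : det_achieves eps N -> rand_achieves eps N.
Proof.
case=> A HA.
exists _, R, (\d_(0 : R) : probability R R), (fun i (_ : R) h => A i h).
move=> f Hf.
have Hh n (u : R) : rand_hist (fun i (_ : R) h => A i h) f u n = det_hist A f n.
  by elim: n => //= n ->.
have Hq i : rand_query (fun i (_ : R) h => A i h) f i = fun _ => det_query A f i.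
  by apply/funext => u; rewrite /rand_query /det_query Hh.
split.
  by move=> i; rewrite Hq; exact: measurable_cst.
case: (HA f Hf) => i [iN st].
have -> : [set u | exists i0, (i0 < N)%N /\
    stationary eps f (rand_query (fun i (_ : R) h => A i h) f i0 u)] = setT.
  by apply/seteqP; split => // u _; exists i; rewrite Hq.
rewrite probability_setT lee_fin.
first [by rewrite invf_le1 | by rewrite invr_le1 | (have h2 : (2^-1 : R) <= 1 by rewrite invf_le1 // ler1n); exact: h2 | idtac].

Qed.

Lemma lower_N (eps : R) N : 0 < eps -> eps < 8^-1 -> rand_achieves eps N ->
  24^-1 * ln (eps^-1) <= N%:R.
Proof.
move=> e e8 ra.
have x0 : 0 <= (2 * eps)^-1 by rewrite invr_ge0; lra.
have [M [M1 M2]] : exists M : nat, M%:R <= (2 * eps)^-1 /\ (2 * eps)^-1 < M%:R + 1.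
  exists (Num.trunc ((2 * eps)^-1)).
  by have /andP [a b] := truncn_itv x0; split => //; rewrite natr1.
have hM : 2 * eps * eps * (M%:R * M%:R) <= 1.
  have Mle : M%:R * (2 * eps) <= 1.
    rewrite -[X in _ <= X](@mulVf _ (2 * eps)); last by rewrite mulf_neq0 //; lra.
    by apply: ler_wpM2r => //; lra.
  have : 0 <= M%:R * (2 * eps) by apply: mulr_ge0 => //; lra.
  have -> : 2 * eps * eps * (M%:R * M%:R) = (M%:R * (2 * eps)) * (M%:R * (2 * eps)) / 2.
    by field.
  move: Mle; set a := M%:R * (2 * eps) => Mle a0.
  nra.
have key := @lower_main R eps N M e hM ra.
have e1 : 1 < eps^-1 by rewrite invf_gt1 //; lra.
have ie : eps^-1 = 2 * (2 * eps)^-1 by field; lra.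
have b1 : eps^-1 <= 8 * (3 ^ N)%:R.
  have : 1 <= (3 ^ N)%:R :> R by rewrite ler1n expn_gt0.
  lra.
have e9 : 8 < eps^-1.
  rewrite -[X in X < _](@invrK _ 8) ltf_pV2 ?posrE ?invr_gt0 //.
have N1 : (1 <= N)%N.
  case: N ra key b1 => // _ _ b1; rewrite expn0 in b1; move: b1; rewrite /= mulr1; lra.
have b2 : eps^-1 <= 24 ^+ N.
  apply: le_trans b1 _.
  have -> : 24 ^+ N = 8 ^+ N * 3 ^+ N :> R by rewrite -exprMn; congr (_ ^+ _); lra.
  rewrite natrX; apply: ler_wpM2r; first exact: exprn_ge0.
  rewrite -[X in X <= _]expr1 ler_eXn2l //; lra.
have l24 : ln (24 : R) < 24 by apply: ln_sublinear.
have l24' : 0 <= ln (24 : R) by apply: ln_ge0; lra.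
have b3 : ln (eps^-1) <= ln (24 : R) *+ N.
  rewrite -lnXn; last lra.
  by rewrite ler_ln // posrE; [lra| apply: exprn_gt0; lra].
rewrite -[ln (24 : R) *+ N]mulr_natr in b3.
have : 0 <= N%:R :> R by [].
rewrite mulrC ler_pdivrMr; last lra.
nra.
Qed.

Theorem main_thm :
  exists c : R, 0 < c /\
    forall eps : R, 0 < eps -> eps < 8^-1 ->
      (C_rand eps <= C_det eps)%E /\
      ((c * ln (eps^-1))%:E <= C_rand eps)%E.
Proof.
exists 24^-1; split; first by rewrite invr_gt0.
move=> eps e e8; split.
  apply: ereal_inf_le_tmp => _ [N dN <-]; exists N => //; exact: det_rand.
apply: le_ereal_inf_tmp => _ [N rN <-].
by rewrite lee_fin; exact: lower_N.
Qed.
End Fin.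


Theorem theorem2p4 (R : realType) :
  exists c : R, 0 < c /\
    forall eps : R, 0 < eps -> eps < 8^-1 ->
      (C_rand eps <= C_det eps)%E /\
      ((c * ln (eps^-1))%:E <= C_rand eps)%E.
Proof. exact: main_thm. Qed.
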